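(* For every finite simple graph $G$, $$\vartheta(G)\;=\;\alpha_{\mathcal S}(G)\;=\;\inf_A\ \min\Big\{W_A(x)\ \Big|\ x\in\big[\lambda_{\min}(A)^{-1},\lambda_{\max}(A)^{-1}\big]\Big\},$$ where in the rightmost expression $A$ ranges over all real symmetric weighted adjacency matrices of $G$.
   Context: $G$ is a finite simple graph (undirected, no loops) with vertex set $\{1,\dots,n\}$. A (real symmetric) weighted adjacency matrix of $G$ is a real symmetric $n\times n$ matrix $A$ with $A_{ij}=0$ whenever $i\neq j$ are non-adjacent and $A_{ii}=0$ for all $i$. $\boldsymbol 1$ is the all-ones vector, $J=\boldsymbol 1\boldsymbol 1^T$, $\langle\cdot,\cdot\rangle$ the standard inner product. $\vartheta(G)$ is the Lovász theta function, which may be taken as $\vartheta(G)=\inf_B\lambda_{\max}(B)$ over real symmetric $B$ with $B_{ij}=1$ whenever $i=j$ or $i,j$ are non-adjacent. Let $\mathcal S_n=\{\boldsymbol v\in\mathbb R^n: \langle \boldsymbol 1,\boldsymbol v\rangle=|\boldsymbol v|^2\}=\{\boldsymbol v: |\boldsymbol v-\tfrac12\boldsymbol 1|^2=n/4\}$. The spherical independence number is $\alpha_{\mathcal S}(G)=\inf_A\sup\{|\boldsymbol v|^2:\boldsymbol v\in\mathcal S_n,\ \langle \boldsymbol v,A\boldsymbol v\rangle=0\}$, with $A$ over real symmetric weighted adjacency matrices of $G$. For such $A$ with spectral decomposition $A=\sum_{\lambda\in\sigma(A)}\lambda P_\lambda$ ($P_\lambda$ the orthogonal projection onto the $\lambda$-eigenspace),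 the weighted walk-generating function is $W_A(x)=\langle\boldsymbol 1,(I-xA)^{-1}\boldsymbol 1\rangle=\sum_{\lambda\in\sigma(A)}\frac{\langle\boldsymbol 1,P_\lambda\boldsymbol 1\rangle}{1-\lambda x}$; terms with $\langle\boldsymbol 1,P_\lambda\boldsymbol 1\rangle=0$ are omitted, so that $W_A(\lambda^{-1})$ is defined in that case, and at an endpoint $x=\lambda^{-1}$ with $\langle\boldsymbol 1,P_\lambda\boldsymbol 1\rangle>0$ the value is $+\infty$. $\lambda_{\min}(A),\lambda_{\max}(A)$ are the smallest and largest eigenvalues of $A$ (strictly negative and positive when $A\ne0$); when $A=0$ the inner minimum is taken to equal $n$ (interpreting the interval as $(-\infty,+\infty)$). *)

(* Defs.v *)
From HB Require Import structures.
From mathcomp Require Import all_boot all_order all_algebra.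
From mathcomp Require Import boolp classical_sets fsbigop reals ereal.
Set Implicit Arguments. Unset Strict Implicit. Unset Printing Implicit Defensive.
Import Order.TTheory GRing.Theory Num.Theory.
Local Open Scope ring_scope.
Local Open Scope classical_set_scope.

Section Defs.
Variable R : realType.
Variable n : nat.

Definition ones : 'cV[R]_n := const_mx 1.
Definition inner (u v : 'cV[R]_n) : R := (u^T *m v) 0 0.
Definition sqnorm (v : 'cV[R]_n) : R := inner v v.

Definition is_wadj (e : rel 'I_n) (A : 'M[R]_n) : Prop :=
  A^T = A /\ (forall i, A i i = 0) /\ (forall i j, i != j -> ~~ e i j -> A i j = 0).

Definition is_theta_feasible (e : rel 'I_n) (B : 'M[R]_n) : Prop :=
  B^T = B /\ (forall i j, (i == j) || ~~ e i j -> B i j = 1).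

Definition spectrum (A : 'M[R]_n) : set R := [set l | eigenvalue A l].
Definition lambda_max (A : 'M[R]_n) : R := sup (spectrum A).
Definition lambda_min (A : 'M[R]_n) : R := inf (spectrum A).

Definition theta (e : rel 'I_n) : R :=
  inf [set lambda_max B | B in is_theta_feasible e].

Definition Sn : set 'cV[R]_n := [set v | inner ones v = sqnorm v].

Definition alphaS (e : rel 'I_n) : R :=
  inf [set sup [set sqnorm v | v in [set v | Sn v /\ inner v (A *m v) = 0]]
      | A in is_wadj e].

Definition is_eig_proj (A : 'M[R]_n) (l : R) (P : 'M[R]_n) : Prop :=
  P^T = P /\ P *m P = P /\ (forall v : 'cV[R]_n, P *m v = v <-> A *m v = l *: v).

Definition eig_proj (A : 'M[R]_n) (l : R) : 'M[R]_n := xget 0 (is_eig_proj A l).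

Definition spec_coef (A : 'M[R]_n) (l : R) : R := inner ones (eig_proj A l *m ones).

(* weighted walk-generating function via the spectral decomposition,
   with the conventions of the paper (terms with zero coefficient omitted,
   +oo at a pole with positive coefficient) *)
Definition wwgf (A : 'M[R]_n) (x : R) : \bar R :=
  if `[< exists l, [/\ spectrum A l, 0 < spec_coef A l & 1 - l * x = 0] >]
  then +oo%E
  else (\sum_(l \in [set l | spectrum A l /\ spec_coef A l != 0])
          spec_coef A l / (1 - l * x))%:E.

Definition wint (A : 'M[R]_n) : set R :=
  [set x | (lambda_min A)^-1 <= x <= (lambda_max A)^-1].

(* inner minimum (written as an infimum; attainment is asserted separately),
   equal to n when A = 0 *)
Definition wmin (A : 'M[R]_n) : \bar R :=
  if A == 0 then (n%:R)%:E else ereal_inf [set wwgf A x | x in wint A].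

Definition walk_value (e : rel 'I_n) : \bar R :=
  ereal_inf [set wmin A | A in is_wadj e].

End Defs.

(* Main.v *)
Require Import Defs.
From HB Require Import structures.
From mathcomp Require Import all_boot all_order all_algebra.
From mathcomp Require Import boolp classical_sets fsbigop reals ereal.
From mathcomp Require Import complex ring lra.
Set Implicit Arguments. Unset Strict Implicit. Unset Printing Implicit Defensive.
Import Order.TTheory GRing.Theory Num.Theory.
Local Open Scope ring_scope.

Section Cplx.
Variable R : rcfType.
Local Notation C := (complex R).
Local Notation CRe := (@complex.Re R).
Local Notation CIm := (@complex.Im R).

Lemma mulcJ_real (z : C) : z * conjc z = (CRe z ^+ 2 + CIm z ^+ 2)%:C%C.
Proof.
case: z => a b /=.
apply/eqP; rewrite eq_complex /=; apply/andP; split; apply/eqP.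
  simpl. ring.
simpl. ring.
Qed.

Lemma sc00 (a : C) (M : 'M[C]_1) : (a *: M) 0 0 = a * M 0 0.
Proof. by rewrite mxE. Qed.

Lemma sym_eig_real n (A : 'M[R]_n) (z : C) : A^T = A ->
  root (char_poly (map_mx (real_complex R) A)) z -> CIm z = 0.
Proof.
move=> sA; rewrite -eigenvalue_root_char => /eigenvalueP [v Hv vn0].
set AC := map_mx (real_complex R) A in Hv.
have ACT : AC^T = AC by rewrite /AC map_trmx sA.
set w := map_mx (@conjc R) v.
have conjAC : map_mx (@conjc R) AC = AC.
  by apply/matrixP => i j; rewrite !mxE /conjc /= oppr0.
have Hw : w *m AC = conjc z *: w.
  by rewrite -conjAC -map_mxM Hv map_mxZ.
set s := (v *m w^T) 0 0.
have e1 : (v *m AC *m w^T) = z *: (v *m w^T) by rewrite Hv scalemxAl.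
have e2 : (v *m AC *m w^T) = conjc z *: (v *m w^T).
  have h : AC *m w^T = conjc z *: w^T by rewrite -{1}ACT -trmx_mul Hw linearZ.
  by rewrite -mulmxA h scalemxAr.
have E : z * s = conjc z * s.
  have := congr1 (fun M : 'M[C]_1 => M 0 0) (etrans (esym e1) e2).
  by rewrite /= !sc00.
have s0 : s != 0.
  have -> : s = (\sum_j (CRe (v 0 j) ^+ 2 + CIm (v 0 j) ^+ 2))%:C%C.
    rewrite /s mxE rmorph_sum; apply: eq_bigr => j _.
    by rewrite mxE /w mxE mulcJ_real.
  apply/negP => /eqP [] H.
  move: vn0; apply/negP; rewrite negbK; apply/eqP/rowP => j; rewrite mxE.
  have := psumr_eq0P (fun i _ => addr_ge0 (sqr_ge0 (CRe (v 0 i))) (sqr_ge0 (CIm (v 0 i)))) H (i := j) isT.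
  case: (v 0 j) => a b /= /eqP; rewrite paddr_eq0 ?sqr_ge0 // !sqrf_eq0 => /andP[/eqP -> /eqP ->].
  by [].
have zz : z = conjc z by apply: (mulIf s0).
clear -zz; move: zz; case: z => a b /= [] /eqP; rewrite -subr_eq0 opprK -mulr2n mulrn_eq0 /=.
by move/eqP.
Qed.

Lemma char_poly_split n (A : 'M[R]_n) : A^T = A ->
  exists rs : seq R, char_poly A = \prod_(x <- rs) ('X - x%:P).
Proof.
move=> sA.
have [r Hr] := closed_field_poly_normal (char_poly (map_mx (real_complex R) A)).
rewrite (monicP (char_poly_monic _)) scale1r in Hr.
exists (map (@complex.Re R) r).
apply: (@map_poly_inj _ _ (real_complex R)).
rewrite map_char_poly Hr rmorph_prod big_map; apply: eq_big_seq => z zr.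
rewrite rmorphB /= map_polyX map_polyC /=; congr (_ - _%:P).
have : root (char_poly (map_mx (real_complex R) A)) z by rewrite Hr root_prod_XsubC.
move/(sym_eig_real sA).
by case: z {zr} => a b /= ->.
Qed.

End Cplx.

Section RealSpec.
Variable R : rcfType.
Variable n' : nat.
Local Notation n := n'.+1.
Variable A : 'M[R]_n.
Hypothesis sA : A^T = A.

Lemma horner_comm2 p p2 : horner_mx A p *m horner_mx A p2 = horner_mx A p2 *m horner_mx A p.
Proof. by rewrite !mulmxE -!rmorphM mulrC. Qed.

Lemma horner_comm p : horner_mx A p *m A = A *m horner_mx A p.
Proof. by have := horner_comm2 p 'X; rewrite horner_mx_X. Qed.

Lemma horner_sym p : (horner_mx A p)^T = horner_mx A p.
Proof.
elim/poly_ind: p => [|p c IH]; first by rewrite rmorph0 trmx0.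
rewrite rmorphD rmorphM /= horner_mx_X horner_mx_C linearD /= tr_scalar_mx.
by rewrite -mulmxE trmx_mul IH sA -horner_comm.
Qed.

Lemma mxtm_eq0 (N : 'M[R]_n) : N^T *m N = 0 -> N = 0.
Proof.
move=> H; apply/matrixP => i j; rewrite mxE.
have := congr1 (fun M : 'M[R]_n => M j j) H; rewrite !mxE => H2.
have Hs : \sum_k N k j ^+ 2 = 0.
  by rewrite -[RHS]H2; apply: eq_bigr => k _; rewrite mxE expr2.
have := psumr_eq0P (fun k _ => sqr_ge0 (N k j)) Hs (i := i) isT.
by move/eqP; rewrite sqrf_eq0 => /eqP.
Qed.

Lemma sq_reduce l p : horner_mx A (('X - l%:P)^+2 * p) = 0 ->
  horner_mx A (('X - l%:P) * p) = 0.
Proof.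
move=> H; apply: mxtm_eq0; rewrite horner_sym mulmxE -rmorphM /=.
have -> : ('X - l%:P) * p * (('X - l%:P) * p) = ('X - l%:P)^+2 * p * p.
  by rewrite expr2; ring.
by rewrite rmorphM /= H mul0r.
Qed.

Lemma undup_reduce s c : horner_mx A (c * \prod_(x <- s) ('X - x%:P)) = 0 ->
  horner_mx A (c * \prod_(x <- undup s) ('X - x%:P)) = 0.
Proof.
elim: s c => [//|x s IH] c /=.
case: ifP => xs.
  move=> H; apply: IH.
  rewrite (perm_big _ (perm_to_rem xs)) /= big_cons.
  have -> : c * (('X - x%:P) * \prod_(j <- rem x s) ('X - j%:P)) =
    ('X - x%:P) * (c * \prod_(j <- rem x s) ('X - j%:P)) by ring.
  apply: sq_reduce.
  move: H; rewrite big_cons (perm_big _ (perm_to_rem xs)) /= big_cons.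
  by rewrite expr2 => H; rewrite -H; congr (horner_mx A _); ring.
rewrite big_cons => H; rewrite big_cons mulrA; apply: IH.
by rewrite -mulrA.
Qed.

Lemma spec_list : exists L : seq R,
  [/\ uniq L, L != [::], horner_mx A (\prod_(x <- L) ('X - x%:P)) = 0
    & forall l, eigenvalue A l = (l \in L)].
Proof.
have [rs Hrs] := char_poly_split sA.
have H0 := Cayley_Hamilton A.
rewrite Hrs -[X in horner_mx A X]mul1r in H0.
have H1 := undup_reduce H0; rewrite mul1r in H1.
exists (undup rs); split => //.
- exact: undup_uniq.
- apply/negP => /eqP E; move: H1; rewrite E big_nil rmorph1 => /eqP.
  by rewrite oner_eq0.
- by move=> l; rewrite eigenvalue_root_char Hrs root_prod_XsubC mem_undup.
Qed.

End RealSpec.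

Section Lagrange.
Variable R : rcfType.
Variable n' : nat.
Local Notation n := n'.+1.
Variable A : 'M[R]_n.
Hypothesis sA : A^T = A.
Variable L : seq R.
Hypothesis uL : uniq L.
Hypothesis L0 : L != [::].
Hypothesis qA : horner_mx A (\prod_(x <- L) ('X - x%:P)) = 0.

Definition lc (l : R) := \prod_(m <- L | m != l) (l - m).
Definition Lp (l : R) : {poly R} := (lc l)^-1 *: \prod_(m <- L | m != l) ('X - m%:P).
Definition Pj (l : R) : 'M[R]_n := horner_mx A (Lp l).

Lemma lc_neq0 l : lc l != 0.
Proof.
by rewrite /lc prodf_seq_neq0; apply/allP => m _; apply/implyP; rewrite subr_eq0 eq_sym.
Qed.

Lemma Lp_eval l m : l \in L -> m \in L -> (Lp l).[m] = (m == l)%:R.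
Proof.
move=> lL mL; rewrite /Lp hornerZ horner_prod.
case: eqP => [->|/eqP ml].
  rewrite (eq_bigr (fun m => l - m)) ?mulVf ?lc_neq0 // => i _.
  by rewrite hornerXsubC.
rewrite -big_filter (bigD1_seq m) /= ?hornerXsubC ?subrr ?mul0r ?mulr0 //.
  by rewrite mem_filter ml mL.
by rewrite filter_uniq.
Qed.

Lemma size_Lp l : l \in L -> (size (Lp l) <= size L)%N.
Proof.
move=> lL; apply: leq_trans (size_scale_leq _ _) _.
rewrite -big_filter size_prod_XsubC -rem_filter // size_rem //.
by case: (L) L0.
Qed.

Lemma sum_Lp : \sum_(l <- L) Lp l = 1.
Proof.
apply/eqP; rewrite -subr_eq0; apply/negPn/negP => D0.
have HR : all (root (\sum_(l <- L) Lp l - 1)) L.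
  apply/allP => m mL; rewrite /root hornerD hornerN horner_sum hornerC.
  rewrite (eq_big_seq (fun l => (m == l)%:R)); last by move=> l lL; rewrite Lp_eval.
  rewrite (bigD1_seq m) //= eqxx big1 ?addr0 ?subrr // => i /negPf.
  by rewrite eq_sym => ->.
have := max_poly_roots D0 HR uL; apply/negP; rewrite -leqNgt.
apply: leq_trans (size_polyD _ _) _; rewrite geq_max; apply/andP; split.
  rewrite big_seq; elim/big_rec: _ => [|l p lL Hp]; first by rewrite size_poly0.
  apply: leq_trans (size_polyD _ _) _; rewrite geq_max Hp size_Lp //.
have -> : (-1 : {poly R}) = (-1)%:P by rewrite polyCN polyC1.
apply: leq_trans (size_polyC_leq1 _) _; by case: (L) L0.
Qed.

Lemma XsubLp l : l \in L -> ('X - l%:P) * Lp l = (lc l)^-1 *: \prod_(x <- L) ('X - x%:P).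
Proof.
move=> lL; rewrite /Lp -scalerAr; congr (_ *: _).
by rewrite (bigD1_seq l).
Qed.

Lemma APj l : l \in L -> A *m Pj l = l *: Pj l.
Proof.
move=> lL; apply/eqP; rewrite -subr_eq0 -mul_scalar_mx -mulmxBl.
have : horner_mx A (('X - l%:P) * Lp l) = 0.
  by rewrite XsubLp // linearZ /= qA scaler0.
by rewrite rmorphM /= rmorphB /= horner_mx_X horner_mx_C mulmxE => ->.
Qed.

Lemma horner_eig k (W : 'M[R]_(n, k)) m p : A *m W = m *: W ->
  horner_mx A p *m W = p.[m] *: W.
Proof.
move=> AW; elim/poly_ind: p => [|p c IH]; first by rewrite rmorph0 horner0 mul0mx scale0r.
rewrite rmorphD rmorphM /= horner_mx_X horner_mx_C hornerMXaddC.
rewrite mulmxDl -mulmxE -mulmxA AW -scalemxAr IH scalerA mul_scalar_mx scalerDl.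
by rewrite mulrC.
Qed.

Lemma PjPj l m : l \in L -> m \in L -> Pj l *m Pj m = (m == l)%:R *: Pj m.
Proof.
by move=> lL mL; rewrite {1}/Pj (horner_eig _ (APj mL)) Lp_eval.
Qed.

Lemma Pj_sym l : (Pj l)^T = Pj l.
Proof. exact: horner_sym. Qed.

Lemma sum_Pj : \sum_(l <- L) Pj l = 1%:M.
Proof. by rewrite /Pj -rmorph_sum /= sum_Lp rmorph1. Qed.

Lemma Pj_fix l (v : 'cV[R]_n) : l \in L -> (Pj l *m v = v <-> A *m v = l *: v).
Proof.
move=> lL; split => [<-|Av].
  by rewrite mulmxA APj // scalemxAl.
by rewrite /Pj (horner_eig _ Av) Lp_eval // eqxx scale1r.
Qed.

End Lagrange.

Local Open Scope classical_set_scope.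

Section Inner.
Variable R : realType.
Variable n : nat.
Implicit Types (u v w : 'cV[R]_n) (M : 'M[R]_n).

Lemma innerE u v : inner u v = \sum_i u i 0 * v i 0.
Proof. by rewrite /inner mxE; apply: eq_bigr => i _; rewrite mxE. Qed.

Lemma innerC u v : inner u v = inner v u.
Proof. by rewrite !innerE; apply: eq_bigr => i _; rewrite mulrC. Qed.

Lemma innerDr u v w : inner u (v + w) = inner u v + inner u w.
Proof. by rewrite !innerE -big_split; apply: eq_bigr => i _; rewrite mxE mulrDr. Qed.

Lemma innerDl u v w : inner (v + w) u = inner v u + inner w u.
Proof. by rewrite innerC innerDr !(innerC u). Qed.

Lemma innerZr a u v : inner u (a *: v) = a * inner u v.
Proof. by rewrite !innerE mulr_sumr; apply: eq_bigr => i _; rewrite mxE mulrCA. Qed.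

Lemma innerZl a u v : inner (a *: u) v = a * inner u v.
Proof. by rewrite innerC innerZr innerC. Qed.

Lemma innerNr u v : inner u (- v) = - inner u v.
Proof. by rewrite -scaleN1r innerZr mulN1r. Qed.

Lemma innerNl u v : inner (- u) v = - inner u v.
Proof. by rewrite innerC innerNr innerC. Qed.

Lemma innerBr u v w : inner u (v - w) = inner u v - inner u w.
Proof. by rewrite innerDr innerNr. Qed.

Lemma innerBl u v w : inner (v - w) u = inner v u - inner w u.
Proof. by rewrite innerDl innerNl. Qed.

Lemma inner0r u : inner u 0 = 0.
Proof. by rewrite innerE big1 // => i _; rewrite mxE mulr0. Qed.

Lemma inner0l u : inner 0 u = 0.
Proof. by rewrite innerC inner0r. Qed.

Lemma inner_sumr (I : Type) (r : seq I) (F : I -> 'cV[R]_n) u :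
  inner u (\sum_(i <- r) F i) = \sum_(i <- r) inner u (F i).
Proof.
elim: r => [|x r IH]; first by rewrite !big_nil inner0r.
by rewrite !big_cons innerDr IH.
Qed.

Lemma inner_mul u M v : inner u (M *m v) = inner (M^T *m u) v.
Proof. by rewrite /inner trmx_mul trmxK mulmxA. Qed.

Lemma inner_sym u M v : M^T = M -> inner u (M *m v) = inner (M *m u) v.
Proof. by move=> sM; rewrite inner_mul sM. Qed.

Lemma sqnorm_ge0 v : 0 <= sqnorm v.
Proof. by rewrite /sqnorm innerE sumr_ge0 // => i _; rewrite -expr2 sqr_ge0. Qed.

Lemma sqnorm_eq0 v : sqnorm v = 0 -> v = 0.
Proof.
rewrite /sqnorm innerE => H; apply/matrixP => i j; rewrite (ord1 j) mxE.
have Hs : \sum_k v k 0 ^+ 2 = 0.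
  by rewrite -[RHS]H; apply: eq_bigr => k _; rewrite expr2.
have := psumr_eq0P (fun k _ => sqr_ge0 (v k 0)) Hs (i := i) isT.
by move/eqP; rewrite sqrf_eq0 => /eqP.
Qed.

Lemma sqnorm_gt0 v : v != 0 -> 0 < sqnorm v.
Proof.
move=> v0; rewrite lt_neqAle sqnorm_ge0 andbT eq_sym; apply/negP => /eqP/sqnorm_eq0.
by apply/eqP.
Qed.

Lemma J_mul v : const_mx 1 *m v = inner (ones R n) v *: ones R n.
Proof.
apply/matrixP => i j; rewrite (ord1 j) !mxE innerE mulr1.
by apply: eq_bigr => k _; rewrite !mxE.
Qed.

Lemma inner_J v : inner v (const_mx 1 *m v) = (inner (ones R n) v) ^+ 2.
Proof. by rewrite J_mul innerZr innerC expr2. Qed.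

Lemma inner_delta M (i j : 'I_n) : inner (delta_mx i 0) (M *m delta_mx j 0) = M i j.
Proof.
rewrite innerE (bigD1 i) //= big1 ?addr0.
  rewrite mxE !eqxx mul1r mxE (bigD1 j) //= big1 ?addr0 ?mxE ?eqxx ?mulr1 //.
  by move=> k /negPf kj; rewrite mxE kj mulr0.
by move=> k /negPf ki; rewrite mxE ki mul0r.
Qed.

Lemma inner_ones_delta (i : 'I_n) : inner (ones R n) (delta_mx i 0) = 1.
Proof.
rewrite innerE (bigD1 i) //= big1 ?addr0 ?mxE ?eqxx ?mulr1 //.
by move=> k /negPf ki; rewrite !mxE ki mulr0.
Qed.

Lemma sqnorm_delta (i : 'I_n) : sqnorm (delta_mx i 0 : 'cV[R]_n) = 1.
Proof. by rewrite /sqnorm -[X in inner _ X]mul1mx inner_delta mxE eqxx. Qed.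

Lemma inner_ones_ones : inner (ones R n) (ones R n) = n%:R.
Proof.
rewrite innerE (eq_bigr (fun _ => 1)) ?sumr_const ?card_ord // => i _.
by rewrite !mxE mulr1.
Qed.

Lemma mx_ext M M' : (forall v : 'cV[R]_n, M *m v = M' *m v) -> M = M'.
Proof.
move=> H; apply/matrixP => i j.
have := congr1 (fun N : 'cV[R]_n => N i 0) (H (delta_mx j 0)).
by rewrite -!colE !mxE.
Qed.

End Inner.

Section SpecLink.
Variable R : realType.
Variable n' : nat.
Local Notation n := n'.+1.
Variable A : 'M[R]_n.
Hypothesis sA : A^T = A.

Lemma eig_proj_unique l P P' : is_eig_proj A l P -> is_eig_proj A l P' -> P = P'.
Proof.
have key : forall Q Q', is_eig_proj A l Q -> is_eig_proj A l Q' -> Q' *m Q = Q.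
  move=> Q Q' [QT [QQ HQ]] [Q'T [Q'Q' HQ']]; apply: mx_ext => v.
  rewrite -mulmxA; apply/HQ'; apply/HQ; by rewrite mulmxA QQ.
move=> HP HP'; have e1 := key _ _ HP HP'; have e2 := key _ _ HP' HP.
case: HP => [PT _]; case: HP' => [P'T _].
by rewrite -PT -e1 trmx_mul PT P'T e2.
Qed.

Lemma spec_pack : exists L : seq R,
  [/\ uniq L, (forall l, spectrum A l <-> l \in L),
   \sum_(l <- L) eig_proj A l = 1%:M,
   (forall l, l \in L -> A *m eig_proj A l = l *: eig_proj A l) &
   ((forall l m, l \in L -> m \in L ->
      eig_proj A l *m eig_proj A m = (m == l)%:R *: eig_proj A m) /\
   (forall l, l \in L -> (eig_proj A l)^T = eig_proj A l))].
Proof.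
have [L [uL L0 qA eL]] := spec_list sA.
have HP : forall l, l \in L -> is_eig_proj A l (Pj A L l).
  move=> l lL; split; first exact: Pj_sym.
  split; first by rewrite PjPj // eqxx scale1r.
  by move=> v; apply: Pj_fix.
have EP : forall l, l \in L -> eig_proj A l = Pj A L l.
  move=> l lL; apply: (eig_proj_unique _ (HP l lL)).
  by apply: xgetPex; exists (Pj A L l); apply: HP.
exists L; split => //.
- by move=> l; rewrite /spectrum /= eL.
- by rewrite (eq_big_seq (Pj A L)) ?sum_Pj // => l lL; rewrite EP.
- by move=> l lL; rewrite EP // APj.
split.
- by move=> l m lL mL; rewrite !EP // PjPj.
- by move=> l lL; rewrite EP // Pj_sym.
Qed.

End SpecLink.

Section SpecUse.
Variable R : realType.
Variable n' : nat.
Local Notation n := n'.+1.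
Variable A : 'M[R]_n.
Hypothesis sA : A^T = A.
Variable L : seq R.
Hypothesis uL : uniq L.
Hypothesis specL : forall l, spectrum A l <-> l \in L.
Hypothesis sumE : \sum_(l <- L) eig_proj A l = 1%:M.
Hypothesis AE : forall l, l \in L -> A *m eig_proj A l = l *: eig_proj A l.
Hypothesis EE : forall l m, l \in L -> m \in L ->
      eig_proj A l *m eig_proj A m = (m == l)%:R *: eig_proj A m.
Hypothesis ET : forall l, l \in L -> (eig_proj A l)^T = eig_proj A l.

Local Notation E := (eig_proj A).

Lemma decomp_v (v : 'cV[R]_n) : v = \sum_(l <- L) E l *m v.
Proof. by rewrite -mulmx_suml sumE mul1mx. Qed.

Lemma quadE l (v : 'cV[R]_n) : l \in L -> inner v (E l *m v) = sqnorm (E l *m v).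
Proof.
move=> lL; rewrite /sqnorm [RHS]inner_mul ET // mulmxA (EE lL lL) eqxx scale1r.
by rewrite innerC.
Qed.

Lemma quadE_ge0 l (v : 'cV[R]_n) : l \in L -> 0 <= inner v (E l *m v).
Proof. by move=> lL; rewrite quadE // sqnorm_ge0. Qed.

Lemma quad_comb (f : R -> R) (v : 'cV[R]_n) :
  inner v ((\sum_(l <- L) f l *: E l) *m v) = \sum_(l <- L) f l * inner v (E l *m v).
Proof.
rewrite mulmx_suml inner_sumr; apply: eq_bigr => l _.
by rewrite -scalemxAl innerZr.
Qed.

Lemma A_decomp : A = \sum_(l <- L) l *: E l.
Proof.
rewrite -{1}[A]mulmx1 -sumE mulmx_sumr big_seq [RHS]big_seq.
by apply: eq_bigr => l lL; rewrite AE.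
Qed.

Lemma I_decomp : 1%:M = \sum_(l <- L) 1 *: E l :> 'M[R]_n.
Proof. by rewrite -sumE; apply: eq_bigr => l _; rewrite scale1r. Qed.

Lemma sqnorm_decomp (v : 'cV[R]_n) : sqnorm v = \sum_(l <- L) inner v (E l *m v).
Proof.
by rewrite /sqnorm -{2}[v]mul1mx I_decomp quad_comb; apply: eq_bigr => l _; rewrite mul1r.
Qed.

Lemma quadA (v : 'cV[R]_n) : inner v (A *m v) = \sum_(l <- L) l * inner v (E l *m v).
Proof. by rewrite {1}A_decomp quad_comb. Qed.

Lemma L_neq0 : L != [::].
Proof.
apply/negP => /eqP L0; move: sumE; rewrite L0 big_nil => /eqP.
by rewrite eq_sym -/(1 : 'M[R]_n) oner_eq0.
Qed.

Lemma L_bound l : l \in L -> `|l| <= \sum_(x <- L) `|x|.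
Proof.
move=> lL; rewrite (bigD1_seq l) //= lerDl sumr_ge0 // => i _.
Qed.

Lemma spec_has_sup : has_sup (spectrum A).
Proof.
split.
  by case: L L_neq0 specL => // l s _ H; exists l; apply/H; rewrite mem_head.
exists (\sum_(x <- L) `|x|) => l /specL lL.
by apply: le_trans (L_bound lL); rewrite ler_norm.
Qed.

Lemma spec_has_lbound : has_lbound (spectrum A).
Proof.
exists (- \sum_(x <- L) `|x|) => l /specL lL.
by rewrite lerNl; apply: le_trans (L_bound lL); rewrite -normrN ler_norm.
Qed.

Lemma lmax_ub l : l \in L -> l <= lambda_max A.
Proof. by move=> lL; apply: sup_upper_bound spec_has_sup _ _; apply/specL. Qed.

Lemma lmin_lb l : l \in L -> lambda_min A <= l.
Proof. by move=> lL; apply: ge_inf spec_has_lbound _ _; apply/specL. Qed.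

Lemma rayleigh_max (v : 'cV[R]_n) : inner v (A *m v) <= lambda_max A * sqnorm v.
Proof.
rewrite quadA sqnorm_decomp mulr_sumr big_seq [X in _ <= X]big_seq.
apply: ler_sum => l lL; apply: ler_wpM2r; [exact: quadE_ge0 | exact: lmax_ub].
Qed.

Lemma rayleigh_min (v : 'cV[R]_n) : lambda_min A * sqnorm v <= inner v (A *m v).
Proof.
rewrite quadA sqnorm_decomp mulr_sumr big_seq [X in _ <= X]big_seq.
apply: ler_sum => l lL; apply: ler_wpM2r; [exact: quadE_ge0 | exact: lmin_lb].
Qed.

Lemma M_decomp x : 1%:M - x *: A = \sum_(l <- L) (1 - l * x) *: E l.
Proof.
rewrite {1}A_decomp I_decomp scaler_sumr -sumrB; apply: eq_bigr => l _.
by rewrite scalerA scalerBl mulrC.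
Qed.

Lemma quadM x (v : 'cV[R]_n) :
  inner v ((1%:M - x *: A) *m v) = \sum_(l <- L) (1 - l * x) * inner v (E l *m v).
Proof. by rewrite M_decomp quad_comb. Qed.

Lemma ME x l : l \in L -> (1%:M - x *: A) *m E l = (1 - l * x) *: E l.
Proof.
move=> lL; rewrite mulmxBl mul1mx -scalemxAl AE // scalerA scalerBl scale1r.
by rewrite mulrC.
Qed.

Definition cf l := inner (ones R n) (E l *m ones R n).

Lemma cf_ge0 l : l \in L -> 0 <= cf l.
Proof. exact: quadE_ge0. Qed.

Lemma cf_eq0 l : l \in L -> cf l = 0 -> E l *m ones R n = 0.
Proof. by move=> lL; rewrite /cf quadE // => /sqnorm_eq0. Qed.

Definition yv x := \sum_(l <- L) (1 - l * x)^-1 *: (E l *m ones R n).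

Lemma My x : (forall l, l \in L -> 0 < cf l -> 1 - l * x != 0) ->
  (1%:M - x *: A) *m yv x = ones R n.
Proof.
move=> H; rewrite /yv mulmx_sumr {2}[ones R n]decomp_v big_seq [RHS]big_seq.
apply: eq_bigr => l lL; rewrite -scalemxAr mulmxA ME // -scalemxAl scalerA.
have [w0|w0] := eqVneq (1 - l * x) 0.
  have c0 : cf l = 0.
    apply/eqP; rewrite eq_le cf_ge0 // andbT leNgt; apply/negP => cpos.
    by move: (H l lL cpos); rewrite w0 eqxx.
  by rewrite cf_eq0 // scaler0.
by rewrite mulVf // scale1r.
Qed.

Lemma inner1y x : inner (ones R n) (yv x) = \sum_(l <- L) cf l / (1 - l * x).
Proof.
rewrite /yv inner_sumr; apply: eq_bigr => l _; by rewrite innerZr mulrC.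
Qed.

End SpecUse.

Section Quad.
Variable R : realType.
Variable n : nat.
Implicit Types (u v w : 'cV[R]_n) (M : 'M[R]_n).

Lemma quad_expand M u v t : M^T = M ->
  inner (v - t *: u) (M *m (v - t *: u)) =
  inner v (M *m v) - 2 * t * inner u (M *m v) + t ^+ 2 * inner u (M *m u).
Proof.
move=> sM.
rewrite mulmxBr -scalemxAr innerBl !innerBr !innerZl !innerZr.
have -> : inner v (M *m u) = inner u (M *m v) by rewrite inner_sym // innerC.
ring.
Qed.

Lemma disc_le (a b c : R) : 0 <= c -> (forall t, 0 <= a - 2 * t * b + t ^+ 2 * c) ->
  b ^+ 2 <= a * c.
Proof.
move=> c0 H.
have [cp|c00] := ltP 0 c.
  have := H (b / c).
  have -> : a - 2 * (b / c) * b + (b / c) ^+ 2 * c = (a * c - b ^+ 2) / c.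
    by field; rewrite gt_eqF.
  by rewrite ler_pdivlMr // mul0r subr_ge0.
have c00' : c = 0 by apply/eqP; rewrite eq_le c00 c0.
have [b0|b0] := eqVneq b 0; first by rewrite b0 c00' expr0n /= mulr0.
have := H ((a + 1) / (2 * b)).
have -> : a - 2 * ((a + 1) / (2 * b)) * b + ((a + 1) / (2 * b)) ^+ 2 * c = -1.
  rewrite c00' mulr0 addr0; field; by rewrite b0.
by rewrite ler0N1.
Qed.

End Quad.

Section Finsler.
Variable R : realType.
Variable n : nat.
Variables A Q : 'M[R]_n.
Hypothesis sA : A^T = A.
Hypothesis sQ : Q^T = Q.
Hypothesis hyp : forall v, inner v (A *m v) = 0 -> 0 <= inner v (Q *m v).
Local Notation a v := (inner v (A *m v)).
Local Notation q v := (inner v (Q *m v)).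

Lemma pair_ineq u w : 0 < a u -> a w < 0 -> - q u / a u <= q w / - a w.
Proof.
move=> au aw.
set al := a u; set ga := a w; set be := inner w (A *m u).
set p := q u; set r := q w; set m := inner w (Q *m u).
set D := be ^+ 2 - al * ga.
have Dp : 0 < D by rewrite /D subr_gt0; apply: lt_le_trans (sqr_ge0 _); rewrite pmulr_rlt0.
set sd := Num.sqrt D.
have sd2 : sd ^+ 2 = D by rewrite sqr_sqrtr // ltW.
have sdp : 0 < sd by rewrite sqrtr_gt0.
have ga0 : ga != 0 by rewrite lt_eqF.
set s1 := (be + sd) / ga; set s2 := (be - sd) / ga.
have root_s : forall s, ga * s ^+ 2 - 2 * be * s + al = 0 -> a (u - s *: w) = 0.
  move=> s Hs; rewrite quad_expand // -/al -/ga -/be; rewrite -[RHS]Hs; ring.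
have r1 : a (u - s1 *: w) = 0.
  apply: root_s; rewrite /s1.
  have -> : ga * ((be + sd) / ga) ^+ 2 - 2 * be * ((be + sd) / ga) + al =
            (sd ^+ 2 - D) / ga by rewrite /D; field.
  by rewrite sd2 subrr mul0r.
have r2 : a (u - s2 *: w) = 0.
  apply: root_s; rewrite /s2.
  have -> : ga * ((be - sd) / ga) ^+ 2 - 2 * be * ((be - sd) / ga) + al =
            (sd ^+ 2 - D) / ga by rewrite /D; field.
  by rewrite sd2 subrr mul0r.
have H1 := hyp r1; have H2 := hyp r2.
rewrite quad_expand // -/p -/r -/m in H1.
rewrite quad_expand // -/p -/r -/m in H2.
have prod : s1 * s2 = al / ga.
  rewrite /s1 /s2.
  have -> : (be + sd) / ga * ((be - sd) / ga) = (be ^+ 2 - sd ^+ 2) / ga ^+ 2 by field.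
  rewrite sd2 /D; field; done.
have diff : s2 - s1 = - (2 * sd) / ga by rewrite /s1 /s2; field.
have dpos : 0 < s2 - s1.
  have -> : s2 - s1 = (2 * sd) / (- ga) by rewrite diff; field.
  by rewrite divr_gt0 // ?mulr_gt0 // oppr_gt0.
have pr_neg : s1 * s2 < 0 by rewrite prod pmulr_rlt0 // invr_lt0.
have s1n : s1 < 0.
  rewrite ltNge; apply/negP => s1p.
  have : 0 <= s1 * s2 by apply: mulr_ge0 => //; apply: le_trans s1p _; rewrite -subr_ge0 ltW.
  by rewrite leNgt pr_neg.
have s2p : 0 < s2.
  rewrite ltNge; apply/negP => s2n.
  have : 0 <= s1 * s2 by apply: mulr_le0 => //; rewrite ltW.
  by rewrite leNgt pr_neg.
have comb : 0 <= (s2 - s1) * (p - r * (s1 * s2)).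
  have -> : (s2 - s1) * (p - r * (s1 * s2)) =
     s2 * (p - 2 * s1 * m + s1 ^+ 2 * r) + (- s1) * (p - 2 * s2 * m + s2 ^+ 2 * r) by ring.
  by rewrite addr_ge0 // mulr_ge0 // ?oppr_ge0 ltW.
have key : 0 <= p - r * (s1 * s2) by move: comb; rewrite pmulr_rge0.
rewrite prod in key.
rewrite -subr_ge0.
have -> : r / - ga - - p / al = (p - r * (al / ga)) / al by field; rewrite gt_eqF.
by rewrite divr_ge0 // ltW.
Qed.

Lemma finsler : (exists u, 0 < a u) -> (exists w, a w < 0) ->
  exists mu, forall v, 0 <= q v + mu * a v.
Proof.
move=> [u0 au0] [w0 aw0].
set G := [set - q u / a u | u in [set u | 0 < a u]].
have hG : has_sup G.
  split; first by exists (- q u0 / a u0); exists u0.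
  exists (q w0 / - a w0) => _ [u /= au <-]; exact: pair_ineq.
exists (sup G) => v.
have [av|av|av] := ltgtP (a v) 0.
- have : sup G <= q v / - a v.
    apply: ge_sup; first by exists (- q u0 / a u0); exists u0.
    by move=> _ [u /= au <-]; apply: pair_ineq.
  rewrite ler_pdivlMr ?oppr_gt0 // => h.
  by rewrite -subr_ge0 in h; rewrite (le_trans h) // le_eqVlt; apply/orP; left; apply/eqP; ring.
- have : - q v / a v <= sup G by apply: sup_upper_bound hG _ _; exists v.
  rewrite ler_pdivrMr // => h.
  by rewrite -subr_ge0 in h; rewrite (le_trans h) // le_eqVlt; apply/orP; left; apply/eqP; ring.
- by rewrite av mulr0 addr0; apply: hyp.
Qed.

End Finsler.

Section Main.
Variable R : realType.
Variable n' : nat.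
Local Notation n := n'.+1.
Local Notation one := (ones R n).
Local Notation J := (const_mx 1 : 'M[R]_n).

Definition setS (A : 'M[R]_n) :=
  [set sqnorm v | v in [set v | Sn v /\ inner v (A *m v) = 0]].
Definition sS (A : 'M[R]_n) := sup (setS A).

Lemma n_gt0 : (0 : R) < n%:R.
Proof. by rewrite ltr0n. Qed.

Lemma CS1 (v : 'cV[R]_n) : (inner one v) ^+ 2 <= sqnorm v * n%:R.
Proof.
apply: disc_le; first by rewrite ler0n.
move=> t; have := sqnorm_ge0 (v - t *: one).
rewrite /sqnorm -[X in inner _ X]mul1mx quad_expand ?trmx1 //.
by rewrite !mul1mx inner_ones_ones.
Qed.

Lemma Sn_bound (v : 'cV[R]_n) : Sn v -> sqnorm v <= n%:R.
Proof.
rewrite /Sn /= => Sv; have := CS1 v; rewrite Sv => h.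
have s0 := sqnorm_ge0 v; have := n_gt0; nra.
Qed.

Lemma Sn0 : Sn (0 : 'cV[R]_n).
Proof. by rewrite /Sn /= /sqnorm !inner0r. Qed.

Lemma setS_ne A : setS A !=set0.
Proof.
exists 0; exists 0; last by rewrite /sqnorm inner0r.
by split; [exact: Sn0 | rewrite inner0l].
Qed.

Lemma setS_sup A : has_sup (setS A).
Proof.
split; first exact: setS_ne.
by exists n%:R => _ [v [Sv _] <-]; apply: Sn_bound.
Qed.

Lemma sS_ge0 A : 0 <= sS A.
Proof.
apply: sup_upper_bound (setS_sup A) _ _; exists 0; last by rewrite /sqnorm inner0r.
by split; [exact: Sn0 | rewrite inner0l].
Qed.

Lemma sS_le_n A : sS A <= n%:R.
Proof. by apply: ge_sup (setS_ne A) _ => _ [v [Sv _] <-]; apply: Sn_bound. Qed.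

Lemma sS_ge1 (A : 'M[R]_n) : A ord0 ord0 = 0 -> 1 <= sS A.
Proof.
move=> A00; apply: sup_upper_bound (setS_sup A) _ _.
exists (delta_mx ord0 0); last exact: sqnorm_delta.
split; first by rewrite /Sn /= sqnorm_delta inner_ones_delta.
by rewrite inner_delta.
Qed.

Lemma Qhyp (A : 'M[R]_n) (v : 'cV[R]_n) : inner v (A *m v) = 0 ->
  (inner one v) ^+ 2 <= sS A * sqnorm v.
Proof.
move=> av.
have [->|v0] := eqVneq v 0; first by rewrite inner0r expr0n /= /sqnorm inner0r mulr0.
have sp := sqnorm_gt0 v0.
set c := inner one v / sqnorm v.
have Sv' : Sn (c *: v).
  rewrite /Sn /= /sqnorm innerZr !innerZl innerZr /c -/(sqnorm v); field.
  by rewrite gt_eqF.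
have : sqnorm (c *: v) <= sS A.
  apply: sup_upper_bound (setS_sup A) _ _; exists (c *: v) => //; split => //.
  by rewrite -scalemxAr innerZr innerZl av !mulr0.
rewrite /sqnorm innerZr innerZl -/(sqnorm v) /c => h.
have -> : (inner one v) ^+ 2 = inner one v / sqnorm v * (inner one v / sqnorm v * sqnorm v) * sqnorm v.
  by field; rewrite gt_eqF.
by rewrite ler_pM2r.
Qed.


Lemma quad_two (A : 'M[R]_n) (i j : 'I_n) (c : R) :
  inner (delta_mx i 0 + c *: delta_mx j 0) (A *m (delta_mx i 0 + c *: delta_mx j 0)) =
  A i i + c * (A i j + A j i) + c ^+ 2 * A j j.
Proof.
rewrite mulmxDr -scalemxAr !innerDl !innerDr !innerZl !innerZr !inner_delta; ring.
Qed.

Lemma wadj_sym (e : rel 'I_n) (A : 'M[R]_n) : is_wadj e A -> A^T = A.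
Proof. by case. Qed.

Lemma nonzero_signs (e : rel 'I_n) (A : 'M[R]_n) : is_wadj e A -> A != 0 ->
  (exists u, 0 < inner u (A *m u)) /\ (exists w, inner w (A *m w) < 0).
Proof.
move=> [sA [dA _]] /matrix0Pn [i [j Aij]].
have Aji : A j i = A i j by rewrite -[in LHS]sA mxE.
have h : forall c, inner (delta_mx i 0 + c *: delta_mx j 0) (A *m (delta_mx i 0 + c *: delta_mx j 0)) = 2 * c * A i j.
  by move=> c; rewrite quad_two !dA Aji; ring.
have p2 : 0 < A i j ^+ 2 by rewrite exprn_even_gt0.
split.
  by exists (delta_mx i 0 + A i j *: delta_mx j 0); rewrite h -mulrA -expr2 mulr_gt0.
exists (delta_mx i 0 + (- A i j) *: delta_mx j 0); rewrite h mulrN mulNr -mulrA -expr2 oppr_lt0.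
by rewrite mulr_gt0.
Qed.

Lemma mu_exists (e : rel 'I_n) (A : 'M[R]_n) : is_wadj e A ->
  exists mu, forall v : 'cV[R]_n,
    0 <= sS A * sqnorm v - (inner one v) ^+ 2 + mu * inner v (A *m v).
Proof.
move=> wA; have sA := wadj_sym wA.
have [->|A0] := eqVneq A 0.
  exists 0 => v; rewrite mul0r addr0 subr_ge0; apply: Qhyp; by rewrite mul0mx inner0r.
set Q := sS A *: 1%:M - J.
have sQ : Q^T = Q by rewrite /Q linearB /= linearZ /= trmx1 trmx_const.
have qQ : forall v : 'cV[R]_n, inner v (Q *m v) = sS A * sqnorm v - (inner one v) ^+ 2.
  by move=> v; rewrite /Q mulmxBl -scalemxAl mul1mx innerBr innerZr inner_J.
have [[u au] [w aw]] := nonzero_signs wA A0.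
have hyp : forall v, inner v (A *m v) = 0 -> 0 <= inner v (Q *m v).
  by move=> v av; rewrite qQ subr_ge0; apply: Qhyp.
have [mu Hmu] := finsler sA sQ hyp (ex_intro _ u au) (ex_intro _ w aw).
by exists mu => v; rewrite -qQ.
Qed.

Lemma rayleigh_max' (B : 'M[R]_n) : B^T = B ->
  forall v, inner v (B *m v) <= lambda_max B * sqnorm v.
Proof.
move=> sB; have [L [uL specL sumE AE [EE ET]]] := spec_pack sB.
exact: (rayleigh_max uL specL sumE AE EE ET).
Qed.

Lemma eigvec (B : 'M[R]_n) l : B^T = B -> spectrum B l ->
  exists2 v : 'cV[R]_n, B *m v = l *: v & v != 0.
Proof.
move=> sB /= /eigenvalueP [u uB u0]; exists u^T.
  by rewrite -[in LHS]sB -trmx_mul uB linearZ.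
by rewrite trmx_eq0.
Qed.

Lemma spec_ne (B : 'M[R]_n) : B^T = B -> spectrum B !=set0.
Proof.
move=> sB; have [L [uL specL sumE AE [EE ET]]] := spec_pack sB.
by case: (spec_has_sup uL specL sumE).
Qed.

Lemma lmax_le (B : 'M[R]_n) s : B^T = B ->
  (forall v, inner v (B *m v) <= s * sqnorm v) -> lambda_max B <= s.
Proof.
move=> sB H; apply: ge_sup; first exact: spec_ne.
move=> l /(eigvec sB) [v Bv v0].
have := H v; rewrite Bv innerZr -/(sqnorm v).
by rewrite ler_pM2r // sqnorm_gt0.
Qed.

Lemma lmax_ge1 (e : rel 'I_n) (B : 'M[R]_n) : is_theta_feasible e B -> 1 <= lambda_max B.
Proof.
move=> [sB dB]; have := rayleigh_max' sB (delta_mx ord0 0).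
by rewrite inner_delta sqnorm_delta mulr1 dB // eqxx.
Qed.

Lemma theta_set_lb (e : rel 'I_n) : has_lbound [set lambda_max B | B in @is_theta_feasible R n e].
Proof. by exists 1 => _ [B fB <-]; apply: lmax_ge1 fB. Qed.

Lemma J_feasible (e : rel 'I_n) : is_theta_feasible e J.
Proof. by split; [rewrite trmx_const | move=> i j _; rewrite mxE]. Qed.

Lemma theta_set_ne (e : rel 'I_n) : [set lambda_max B | B in @is_theta_feasible R n e] !=set0.
Proof. by exists (lambda_max J); exists J => //; apply: J_feasible. Qed.

Lemma theta_le_sS (e : rel 'I_n) (A : 'M[R]_n) : is_wadj e A -> theta R e <= sS A.
Proof.
move=> wA; have [mu Hmu] := mu_exists wA.
case: (wA) => sA [dA oA].
set B := J - mu *: A.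
have fB : is_theta_feasible e B.
  split; first by rewrite /B linearB /= linearZ /= trmx_const sA.
  move=> i j /orP [/eqP ->|nij]; first by rewrite !mxE dA mulr0 subr0.
  have [->|ij] := eqVneq i j; first by rewrite !mxE dA mulr0 subr0.
  by rewrite !mxE oA // mulr0 subr0.
apply: le_trans (_ : lambda_max B <= _).
  by apply: ge_inf (theta_set_lb e) _ _; exists B.
apply: lmax_le; first by case: fB.
move=> v; have := Hmu v.
rewrite /B mulmxBl -scalemxAl innerBr innerZr inner_J.
move=> h; rewrite -subr_ge0; apply: le_trans h _; rewrite le_eqVlt; apply/orP; left; apply/eqP; ring.
Qed.

Lemma sS_le_lmax (e : rel 'I_n) (B : 'M[R]_n) : is_theta_feasible e B -> sS (B - J) <= lambda_max B.
Proof.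
move=> fB; have sB : B^T = B by case: fB.
apply: ge_sup (setS_ne _) _ => _ [v [Sv av] <-].
move: av; rewrite mulmxBl innerBr inner_J => /eqP; rewrite subr_eq0 => /eqP h.
have r := rayleigh_max' sB v; rewrite h Sv in r.
have s0 := sqnorm_ge0 v; have l1 := lmax_ge1 fB.
nra.
Qed.

Lemma wadj0 (e : rel 'I_n) : is_wadj e (0 : 'M[R]_n).
Proof. by split; [rewrite trmx0 | split => [i|i j _ _]; rewrite mxE]. Qed.

Lemma alpha_set_ne (e : rel 'I_n) : [set sS A | A in @is_wadj R n e] !=set0.
Proof. by exists (sS 0); exists 0 => //; apply: wadj0. Qed.

Lemma alpha_set_lb (e : rel 'I_n) : has_lbound [set sS A | A in @is_wadj R n e].
Proof. by exists 0 => _ [A _ <-]; apply: sS_ge0. Qed.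

Lemma theta_eq_alpha (e : rel 'I_n) : theta R e = alphaS R e.
Proof.
apply/eqP; rewrite eq_le; apply/andP; split.
  apply: lb_le_inf; first exact: alpha_set_ne.
  by move=> _ [A wA <-]; apply: theta_le_sS wA.
apply: lb_le_inf; first exact: theta_set_ne.
move=> _ [B fB <-]; apply: le_trans (sS_le_lmax fB).
apply: ge_inf (alpha_set_lb e) _ _; exists (B - J) => //.
case: fB => sB dB; split; first by rewrite linearB /= trmx_const sB.
split; first by move=> i; rewrite !mxE dB ?eqxx // subrr.
by move=> i j _ nij; rewrite !mxE dB ?nij ?orbT // subrr.
Qed.

End Main.

Section Walk.
Variable R : realType.
Variable n' : nat.
Local Notation n := n'.+1.
Local Notation one := (ones R n).
Local Notation J := (const_mx 1 : 'M[R]_n).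

Section WithL.
Variable A : 'M[R]_n.
Hypothesis sA : A^T = A.
Variable L : seq R.
Hypothesis uL : uniq L.
Hypothesis specL : forall l, spectrum A l <-> l \in L.
Hypothesis sumE : \sum_(l <- L) eig_proj A l = 1%:M.
Hypothesis AE : forall l, l \in L -> A *m eig_proj A l = l *: eig_proj A l.
Hypothesis EE : forall l m, l \in L -> m \in L ->
      eig_proj A l *m eig_proj A m = (m == l)%:R *: eig_proj A m.
Hypothesis ET : forall l, l \in L -> (eig_proj A l)^T = eig_proj A l.

Lemma wwgf_fin x : (forall l, l \in L -> 0 < cf A l -> 1 - l * x != 0) ->
  wwgf A x = (\sum_(l <- L) cf A l / (1 - l * x))%:E.
Proof.
move=> H; rewrite /wwgf asboolF.
  congr (_%:E).
  have -> : [set l | spectrum A l /\ spec_coef A l != 0] =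
            [set` [seq l <- L | cf A l != 0]].
    apply/seteqP; split => l /=.
      by move=> [/specL lL c0]; rewrite mem_filter c0 lL.
    by rewrite mem_filter => /andP [c0 lL]; split => //; apply/specL.
  rewrite -fsbig_seq ?filter_uniq // big_filter big_mkcond /=.
  apply: eq_bigr => l _; case: ifP => // /negbFE /eqP.
  by rewrite /cf => ->; rewrite mul0r.
move=> [l [/specL lL cp w0]].
by move: (H l lL cp); rewrite w0 eqxx.
Qed.

Lemma wwgf_inf x : (exists l, [/\ l \in L, 0 < cf A l & 1 - l * x = 0]) ->
  wwgf A x = +oo%E.
Proof.
move=> [l [lL cp w0]]; rewrite /wwgf asboolT //.
by exists l; split => //; apply/specL.
Qed.

Lemma psdM x : (forall l, l \in L -> 0 <= 1 - l * x) ->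
  forall v, 0 <= inner v ((1%:M - x *: A) *m v).
Proof.
move=> wl v; rewrite (quadM sumE AE) big_seq sumr_ge0 // => l lL.
by rewrite mulr_ge0 ?wl // (quadE_ge0 EE ET).
Qed.

Lemma symM x : (1%:M - x *: A)^T = 1%:M - x *: A.
Proof. by rewrite linearB /= linearZ /= trmx1 sA. Qed.

Lemma CSM x : (forall l, l \in L -> 0 <= 1 - l * x) ->
  (forall l, l \in L -> 0 < cf A l -> 1 - l * x != 0) ->
  forall v, (inner one v) ^+ 2 <= inner v ((1%:M - x *: A) *m v) * (\sum_(l <- L) cf A l / (1 - l * x)).
Proof.
move=> wl nz v.
set M := 1%:M - x *: A.
have My' : M *m yv A L x = one := My sumE AE EE ET nz.
have W1 : inner one (yv A L x) = \sum_(l <- L) cf A l / (1 - l * x) by rewrite inner1y.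
have W2 : inner (yv A L x) (M *m yv A L x) = inner one (yv A L x).
  by rewrite My' innerC.
have Mv : inner (yv A L x) (M *m v) = inner one v.
  by rewrite (inner_sym _ _ (symM x)) My'.
rewrite -W1; apply: disc_le.
  by rewrite -W2; apply: psdM.
move=> t; have := psdM wl (v - t *: yv A L x).
by rewrite quad_expand ?symM // Mv W2.
Qed.

End WithL.

Lemma rayleigh_min' (B : 'M[R]_n) : B^T = B ->
  forall v, lambda_min B * sqnorm v <= inner v (B *m v).
Proof.
move=> sB; have [L [uL specL sumE AE [EE ET]]] := spec_pack sB.
exact: (rayleigh_min uL specL sumE AE EE ET).
Qed.

Lemma lmax_pos (e : rel 'I_n) (A : 'M[R]_n) : is_wadj e A -> A != 0 -> 0 < lambda_max A.
Proof.
move=> wA A0; have [[u au] _] := nonzero_signs wA A0.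
have := rayleigh_max' (wadj_sym wA) u; have := sqnorm_ge0 u.
move=> s0 h; rewrite ltNge; apply/negP => hl.
have : lambda_max A * sqnorm u <= 0 by apply: mulr_le0_ge0.
by move=> h2; move: (lt_le_trans au (le_trans h h2)); rewrite ltxx.
Qed.

Lemma lmin_neg (e : rel 'I_n) (A : 'M[R]_n) : is_wadj e A -> A != 0 -> lambda_min A < 0.
Proof.
move=> wA A0; have [_ [w aw]] := nonzero_signs wA A0.
have := rayleigh_min' (wadj_sym wA) w; have := sqnorm_ge0 w.
move=> s0 h; rewrite ltNge; apply/negP => hl.
have : 0 <= lambda_min A * sqnorm w by apply: mulr_ge0.
by move=> h2; move: (lt_le_trans aw (le_trans h2 h)); rewrite ltxx.
Qed.

Lemma Bprime (e : rel 'I_n) (A : 'M[R]_n) x : is_wadj e A -> A != 0 -> wint A x ->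
  ((sS A)%:E <= wwgf A x)%E.
Proof.
move=> wA A0 /andP [h1 h2].
have sA := wadj_sym wA.
have [L [uL specL sumE AE [EE ET]]] := spec_pack sA.
have lp := lmax_pos wA A0; have ln := lmin_neg wA A0.
have wl : forall l, l \in L -> 0 <= 1 - l * x.
  move=> l lL; have hl1 : lambda_min A <= l by apply: (lmin_lb uL specL).
  have hl2 := lmax_ub uL specL sumE lL.
  have i1 : lambda_min A * (lambda_min A)^-1 = 1 by rewrite mulfV // lt_eqF.
  have i2 : lambda_max A * (lambda_max A)^-1 = 1 by rewrite mulfV // gt_eqF.
  have [x0|x0] := leP 0 x; nra.
have [[l [lL cp w0]]|Hfin] := pselect (exists l, [/\ l \in L, 0 < cf A l & 1 - l * x = 0]).
  by rewrite (wwgf_inf specL) ?leey //; exists l.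
have nz : forall l, l \in L -> 0 < cf A l -> 1 - l * x != 0.
  by move=> l lL cp; apply/eqP => w0; apply: Hfin; exists l.
rewrite (wwgf_fin uL specL) // lee_fin.
apply: ge_sup (setS_ne _) _ => _ [v [Sv av] <-].
have := CSM sA sumE AE EE ET wl nz v.
rewrite mulmxBl mul1mx -scalemxAl innerBr innerZr av mulr0 subr0 -/(sqnorm v) Sv.
set W := \sum_(l <- L) _.
have W0 : 0 <= W.
  rewrite /W big_seq sumr_ge0 // => l lL.
  by rewrite divr_ge0 ?wl // (cf_ge0 EE ET).
have s0 := sqnorm_ge0 v.
nra.
Qed.

Lemma Dprime (e : rel 'I_n) (A : 'M[R]_n) : is_wadj e A -> A != 0 ->
  exists2 x, wint A x & ((wwgf A x) <= (sS A)%:E)%E.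
Proof.
move=> wA A0.
have sA := wadj_sym wA.
have [L [uL specL sumE AE [EE ET]]] := spec_pack sA.
have lp := lmax_pos wA A0; have ln := lmin_neg wA A0.
have [mu Hmu] := mu_exists wA.
set s := sS A.
have s1 : 1 <= s by apply: sS_ge1; case: wA => _ [dA _]; apply: dA.
have sp : 0 < s by apply: lt_le_trans s1.
set x := - mu / s.
set M := 1%:M - x *: A.
have key : forall v, (inner one v) ^+ 2 <= s * inner v (M *m v).
  move=> v; have := Hmu v.
  rewrite /M mulmxBl mul1mx -scalemxAl innerBr innerZr -/(sqnorm v).
  have -> : s * (sqnorm v - x * inner v (A *m v)) = s * sqnorm v + mu * inner v (A *m v).
    by rewrite /x; field; rewrite gt_eqF.
  move=> h; rewrite -subr_ge0; apply: le_trans h _; rewrite le_eqVlt; apply/orP; left; apply/eqP; rewrite /s; ring.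
have wl : forall l, l \in L -> 0 <= 1 - l * x.
  move=> l lL; have [v Av v0] := eigvec sA (proj2 (specL l) lL).
  have := key v; rewrite /M mulmxBl mul1mx -scalemxAl Av scalerA.
  rewrite innerBr innerZr -/(sqnorm v) => h.
  have sv := sqnorm_gt0 v0.
  have : 0 <= s * ((1 - x * l) * sqnorm v).
    by apply: le_trans (sqr_ge0 (inner one v)) _; rewrite mulrBl mul1r.
  rewrite pmulr_rge0 // pmulr_lge0 //; by rewrite mulrC.
have nz : forall l, l \in L -> 0 < cf A l -> 1 - l * x != 0.
  move=> l lL cp; apply/eqP => w0.
  have := key (eig_proj A l *m one).
  rewrite /M mulmxA (ME AE) // w0 scale0r mul0mx inner0r mulr0.
  rewrite -/(cf A l) => h.
  have : cf A l ^+ 2 <= 0 by [].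
  by rewrite leNgt exprn_even_gt0 //= gt_eqF.
exists x.
  have lx : forall l, spectrum A l -> l * x <= 1.
    by move=> l /specL /wl; rewrite subr_ge0 mulrC.
  rewrite /wint /=; apply/andP; split.
    have [x0|x0] := leP 0 x.
      by apply: le_trans x0; rewrite ltW // invr_lt0.
    have ix : x * x^-1 = 1 by rewrite mulfV // lt_eqF.
    have h : x^-1 <= lambda_min A.
      apply: lb_le_inf; first exact: spec_ne.
      move=> l /lx h; nra.
    have im : lambda_min A * (lambda_min A)^-1 = 1 by rewrite mulfV // lt_eqF.
    nra.
  have [x0|x0] := leP x 0.
    by apply: le_trans x0 _; rewrite ltW // invr_gt0.
  have ix : x * x^-1 = 1 by rewrite mulfV // gt_eqF.
  have h : lambda_max A <= x^-1.
    apply: ge_sup; first exact: spec_ne.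
    move=> l /lx h; nra.
  have im : lambda_max A * (lambda_max A)^-1 = 1 by rewrite mulfV // gt_eqF.
  nra.
rewrite (wwgf_fin uL specL) // lee_fin.
set W := \sum_(l <- L) _.
have W0 : 0 <= W.
  rewrite /W big_seq sumr_ge0 // => l lL.
  by rewrite divr_ge0 ?wl // (cf_ge0 EE ET).
have My' : M *m yv A L x = one := My sumE AE EE ET nz.
have := key (yv A L x).
rewrite My' (innerC (yv A L x)) inner1y -/W => h.
nra.
Qed.

Lemma sS0 : sS (0 : 'M[R]_n) = n%:R.
Proof.
apply/eqP; rewrite eq_le sS_le_n /=.
apply: sup_upper_bound (setS_sup _) _ _; exists one; last by rewrite /sqnorm inner_ones_ones.
by split => //; rewrite mul0mx inner0r.
Qed.

Lemma wmin_eq (e : rel 'I_n) (A : 'M[R]_n) : is_wadj e A -> wmin A = (sS A)%:E.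
Proof.
move=> wA; rewrite /wmin.
have [->|A0] := eqVneq A 0; first by rewrite sS0.
apply/eqP; rewrite eq_le; apply/andP; split.
  have [x xw hx] := Dprime wA A0.
  by apply: ge_ereal_inf; exists (wwgf A x) => //; exists x.
by apply/ereal_infP => _ [x xw <-]; apply: Bprime wA A0 xw.
Qed.

Lemma attain (e : rel 'I_n) (A : 'M[R]_n) : is_wadj e A -> A != 0 ->
  exists2 x, wint A x & wwgf A x = wmin A.
Proof.
move=> wA A0; have [x xw hx] := Dprime wA A0.
exists x => //; rewrite (wmin_eq wA); apply/eqP; rewrite eq_le hx.
exact: Bprime wA A0 xw.
Qed.

Lemma walk_eq (e : rel 'I_n) : walk_value R e = (alphaS R e)%:E.
Proof.
rewrite /walk_value.
have -> : [set wmin A | A in @is_wadj R n e] = [set x%:E | x in [set sS A | A in @is_wadj R n e]].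
  by rewrite image_comp; apply: eq_imagel => A wA; apply: wmin_eq wA.
by rewrite ereal_inf_EFin //; [exact: alpha_set_lb | exact: alpha_set_ne].
Qed.

End Walk.

Theorem theorem1_pos (R : realType) (n' : nat) (e : rel 'I_n'.+1) :
  theta R e = alphaS R e /\
  ((alphaS R e)%:E = walk_value R e)%E /\
  (forall A : 'M[R]_n'.+1, is_wadj e A -> A != 0 ->
     exists2 x, wint A x & wwgf A x = wmin A).
Proof.
split; first exact: theta_eq_alpha.
split; first by rewrite walk_eq.
by move=> A wA A0; apply: attain wA A0.
Qed.

Lemma image_const (T U : Type) (P : set T) (f : T -> U) c :
  P !=set0 -> (forall x, P x -> f x = c) -> [set f x | x in P] = [set c].
Proof.
move=> [x0 Px0] H; apply/seteqP; split => [_ [x Px <-]|_ ->] /=.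
  by rewrite H.
by exists x0 => //; rewrite H.
Qed.

Unset Implicit Arguments.

Theorem theorem1 (R : realType) (n : nat) (e : rel 'I_n)
    (e_sym : symmetric e) (e_irr : irreflexive e) :
  theta R e = alphaS R e /\
  ((alphaS R e)%:E = walk_value R e)%E /\
  (forall A : 'M[R]_n, is_wadj e A -> A != 0 ->
     exists2 x, wint A x & wwgf A x = wmin A).
Proof.
case: n e e_sym e_irr => [|n'] e _ _; last exact: theorem1_pos.
have spec0 : forall B : 'M[R]_0, spectrum B = set0.
  move=> B; apply/seteqP; split => l //=.
  by move=> /eigenvalueP [v _]; rewrite (thinmx0 v) eqxx.
have w0 : @is_wadj R 0 e 0.
  by split; [rewrite trmx0 | split => [i|i j _ _]; rewrite mxE].
have Sv0 : forall (A : 'M[R]_0),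
    sup [set sqnorm v | v in [set v | Sn v /\ inner v (A *m v) = 0]] = 0.
  move=> A; rewrite (@image_const _ _ _ _ 0) ?sup1 //.
    exists 0; split; first by rewrite /Sn /= /sqnorm !inner0r.
    by rewrite inner0l.
  by move=> v _; rewrite /sqnorm innerE big_ord0.
have alpha0 : alphaS R e = 0.
  rewrite /alphaS (@image_const _ _ _ _ 0) ?inf1 //; first by exists 0.
have theta0 : theta R e = 0.
  rewrite /theta (@image_const _ _ _ _ 0) ?inf1 //.
    by exists (const_mx 1); split; [rewrite trmx_const | move=> i j _; rewrite mxE].
  by move=> B _; rewrite /lambda_max spec0 sup0.
split; first by rewrite theta0 alpha0.
split.
  rewrite alpha0 /walk_value (@image_const _ _ _ _ 0%:E) ?ereal_inf1 //.
    by exists 0.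
  by move=> A _; rewrite /wmin thinmx0 eqxx.
by move=> A _; rewrite thinmx0 eqxx.
Qed.
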